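(* Let $(M,d)$ be a compact metric space, $\varphi:M\to M$ continuous, and let $f\in B(M)$ be such that for some fixed $n\ge1$, $\epsilon>0$, $\alpha\ge0$, $$\sup_{x\in M}\sup_{y\in B_n(x,\epsilon)}|f(y)-f(x)|\le\alpha.$$ Then there exists a continuous function $g:M\to\mathbb R$ with $\|f-g\|_\infty\le\alpha$.
   Context: $B(M)$: bounded Borel real functions, $\|f\|_\infty=\sup|f|$; $B_n(x,\epsilon)=\{y\in M:d(\varphi^k(y),\varphi^k(x))<\epsilon,\ 0\le k\le n-1\}$. *)

(* Defs.v *)
From HB Require Import structures.
From mathcomp Require Import all_boot all_order all_algebra.
From mathcomp Require Import all_classical all_reals all_analysis.
Set Implicit Arguments. Unset Strict Implicit. Unset Printing Implicit Defensive.
Import Order.TTheory GRing.Theory Num.Theory.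
Import numFieldNormedType.Exports.
Local Open Scope classical_set_scope.
Local Open Scope ring_scope.

Definition bowen_ball (R : realType) (M : metricType R) (phi : M -> M)
  (n : nat) (x : M) (eps : R) : set M :=
  [set y | forall k : nat, (k < n)%N ->
     mdist (iter k phi y) (iter k phi x) < eps].

Definition borel_set (T : topologicalType) (A : set T) : Prop :=
  <<s [set: T], @open T >> A.

Definition borel_fun (T : topologicalType) (R : realType) (f : T -> R) : Prop :=
  forall U : set R, open U -> borel_set (f @^-1` U).

(* Main.v *)
Require Import Defs.
From HB Require Import structures.
From mathcomp Require Import all_boot all_order all_algebra.
From mathcomp Require Import all_classical all_reals all_analysis.
From mathcomp Require Import lra.
Import Order.TTheory GRing.Theory Num.Theory.
Import numFieldNormedType.Exports.
Local Open Scope classical_set_scope.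
Local Open Scope ring_scope.

Section helpers.
Context (R : realType) (M : metricType R).

Lemma mtri (x y z : M) : mdist x z <= mdist x y + mdist y z.
Proof.
apply/ler_addgt0Pr => e e0.
have h1 : ball x (mdist x y + e / 2) y.
  by rewrite ballEmdist /= ltrDl divr_gt0.
have h2 : ball y (mdist y z + e / 2) z.
  by rewrite ballEmdist /= ltrDl divr_gt0.
have := ball_triangle h1 h2; rewrite ballEmdist /= => /ltW.
by rewrite addrACA -splitr.
Qed.

Lemma iter_cont (phi : M -> M) k : continuous phi -> continuous (iter k phi).
Proof.
move=> hphi; elim: k => [|k IH] x /=; first exact: cvg_id.
exact: (continuous_comp (IH x) (hphi _)).
Qed.

End helpers.
Arguments mtri {R M}.
Arguments iter_cont {R M phi}.

Theorem lemma6p4 (R : realType) (M : metricType R) (phi : M -> M) (f : M -> R)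
  (n : nat) (eps alpha : R) :
  compact [set: M] -> continuous phi ->
  borel_fun f -> bounded_fun f ->
  (1 <= n)%N -> 0 < eps -> 0 <= alpha ->
  (forall x y, bowen_ball phi n x eps y -> `|f y - f x| <= alpha) ->
  exists g : M -> R, continuous g /\ (forall x, `|f x - g x| <= alpha).
Proof.
move=> _ hphi _ hb hn heps ha hf.
have [B [B0 hB]] : exists B : R, 0 < B /\ forall x, `|f x| <= B.
  move: hb => [K [Kreal]] /(_ (`|K| + 1)).
  rewrite (le_lt_trans (ler_norm _)) ?ltrDl// => /(_ erefl) fK.
  exists (`|K| + 1); split; first by rewrite ltr_pwDr.
  by move=> x; apply: fK.
pose C := 2 * B / eps.
have C0 : 0 < C by rewrite divr_gt0 // mulr_gt0.
have CE : C * eps = 2 * B by rewrite /C divfK // gt_eqF.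
pose D x y := \sum_(k < n) mdist (iter k phi x) (iter k phi y).
have D0 x y : 0 <= D x y by apply: sumr_ge0 => k _; apply: mdist_ge0.
have Dxx x : D x x = 0 by apply: big1 => k _; apply: mdistxx.
have Dsym x y : D x y = D y x by apply: eq_bigr => k _; apply: metric_sym.
have Dtri x x' y : D x' y <= D x x' + D x y.
  rewrite -big_split /=; apply: ler_sum => k _.
  by rewrite (le_trans (mtri _ (iter k phi x) _)) // metric_sym.
pose S x := [set f y - C * D x y | y in [set: M]].
have Sne x : S x !=set0 by exists (f x - C * D x x); exists x.
have Sub x : ubound (S x) B.
  move=> _ [y _ <-]; rewrite lerBlDr; apply: le_trans (le_trans (ler_norm _) (hB y)) _.
  by rewrite lerDl mulr_ge0 // ltW.
have Shas x : has_ubound (S x) by exists B; apply: Sub.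
pose g x := sup (S x).
have gge x : f x <= g x.
  by apply: ub_le_sup => //; exists x => //; rewrite Dxx mulr0 subr0.
have gle x : g x <= f x + alpha.
  apply: ge_sup => // _ [y _ <-].
  have [Dl|Dg] := ltP (D x y) eps.
    have hy : bowen_ball phi n x eps y.
      move=> k kn; apply: le_lt_trans Dl.
      rewrite metric_sym /D (bigD1 (Ordinal kn)) //= lerDl.
      by apply: sumr_ge0 => i _; apply: mdist_ge0.
    have := hf _ _ hy; rewrite ler_norml => /andP [_ h].
    have := mulr_ge0 (ltW C0) (D0 x y); lra.
  have h1 : 2 * B <= C * D x y by rewrite -CE ler_wpM2l // ltW.
  have := hB y; have := hB x; rewrite !ler_norml => /andP [hx1 _] /andP [_ hy2].
  lra.
have glip x x' : g x <= g x' + C * D x x'.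
  apply: ge_sup => // _ [y _ <-].
  have hs : f y - C * D x' y <= g x' by apply: ub_le_sup => //; exists y.
  have := Dtri x x' y; rewrite (Dsym x x') => h.
  have : C * D x' y <= C * (D x' x + D x y) by rewrite ler_pM2l.
  rewrite mulrDr; lra.
exists g; split; last first.
  move=> x; rewrite ler_norml; have := gge x; have := gle x.
  by move=> h1 h2; apply/andP; split; lra.
move=> x; apply/(@cvgrPdist_lt R R^o) => e e0.
pose d := e / C / n.+1%:R.
have d0 : 0 < d by apply: divr_gt0; [exact: divr_gt0|exact: ltr0Sn].
have key : forall m, \forall t \near x,
    \sum_(k < m) mdist (iter k phi x) (iter k phi t) <= m%:R * d.
  elim => [|m IH].
    by apply: nearW => t; rewrite big_ord0 mul0r.
  have := iter_cont m hphi x.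
  move=> /(@metricType_numDomainType.cvgrPdist_lt _ M) /(_ d d0) hm.
  apply: filterS2 IH hm => t h1 h2.
  rewrite big_ord_recr /= -nat1r mulrDl mul1r.
  by rewrite [d + _]addrC lerD // ltW.
apply: filterS (key n) => t ht.
have hnd : n%:R * d < e / C.
  rewrite /d mulrC -mulrA.
  rewrite -!mulrA ltr_pM2l // gtr_pMr ?invr_gt0 // mulrC ltr_pdivrMr ?ltr0Sn // mul1r ltr_nat //.
have hC : C * D x t < e.
  by rewrite -ltr_pdivlMl // mulrC (le_lt_trans ht).
have h1 := glip x t; have h2 := glip t x; rewrite Dsym in h2.
rewrite ltr_norml; apply/andP; split; lra.
Qed.
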